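(* Every linearly closed proper subset of the abstract linear space $LS^3$ is empty, a single point, or an abstract line of $LS^3$.
   Context: $\mathbb{S}^3$ is the unit sphere of $\mathbb{C}^2$. The abstract linear space $LS^3$ has point set $\mathbb{S}^3$ and abstract lines the sets $L\cap\mathbb{S}^3$ where $L$ is a complex affine line of $\mathbb{C}^2$ meeting $\mathbb{S}^3$ in more than one point (i.e. non-tangential; such $L\cap\mathbb{S}^3$ is a round circle); any two distinct points of $\mathbb{S}^3$ lie on exactly one abstract line. A subset $A\subset\mathbb{S}^3$ is linearly closed if for any two distinct $x,y\in A$ the abstract line through $x$ and $y$ is contained in $A$. Proper means $A\neq\mathbb{S}^3$. *)

(* Defs.v *)
From HB Require Import structures.
From mathcomp Require Import all_boot all_order all_algebra.
From mathcomp Require Import complex.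
From mathcomp Require Import Rstruct.
From Stdlib Require Import Reals.
Set Implicit Arguments. Unset Strict Implicit. Unset Printing Implicit Defensive.
Import Order.TTheory GRing.Theory Num.Theory.
Local Open Scope ring_scope.

Definition CC := complex Rdefinitions.R.

Definition C2 := (CC * CC)%type.

Definition S3 (p : C2) : Prop :=
  p.1 * (p.1)^* + p.2 * (p.2)^* = 1.

Definition cline (a v : C2) (q : C2) : Prop :=
  exists t : CC, q = (a.1 + t * v.1, a.2 + t * v.2).

Definition abstract_line (B : C2 -> Prop) : Prop :=
  exists a v : C2, v <> (0, 0) /\
    (exists x y : C2, x <> y /\ cline a v x /\ S3 x /\ cline a v y /\ S3 y) /\
    (forall q, B q <-> (cline a v q /\ S3 q)).

(* A ⊆ S^3 is linearly closed: for distinct x, y in A, the abstract line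
   through x and y (the unique abstract line containing both) lies in A *)
Definition linearly_closed (A : C2 -> Prop) : Prop :=
  (forall q, A q -> S3 q) /\
  forall x y : C2, A x -> A y -> x <> y ->
    forall B : C2 -> Prop, abstract_line B -> B x -> B y ->
      forall q, B q -> A q.

(* Main.v *)
Require Import Defs.
From HB Require Import structures.
From mathcomp Require Import all_boot all_order all_algebra complex Rstruct.
From mathcomp Require Import ring lra.
Set Implicit Arguments. Unset Strict Implicit. Unset Printing Implicit Defensive.
Import Order.TTheory GRing.Theory Num.Theory.
Local Open Scope ring_scope.

Lemma fold_conj (x : CC) : (Num.conj : {rmorphism CC -> CC}) x = x^*. Proof. by []. Qed.
Ltac pushc := do 3 rewrite ?(rmorphB, rmorphD, rmorphM, rmorphN, rmorph1, rmorph0, fmorphV, rmorph_nat, fold_conj, conjCK, conjCi).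

Definition on (x y q : C2) := cline x (y.1 - x.1, y.2 - x.2) q.
Definition e1 : C2 := (1, 0).
Definition Hc (m u : CC) := u + u^* = 1 + m * m^*.
Definition phi (m u : CC) : C2 := (1 - u^-1, m / u).

Lemma pos1 (m : CC) : 0 < 1 + m * m^*.
Proof. exact: ltr_wpDr (mul_conjC_ge0 m) ltr01. Qed.

Lemma Hc_u0 m u : Hc m u -> u != 0.
Proof.
move=> H; apply/eqP => u0; move: H; rewrite /Hc u0 rmorph0 addr0 => H.
by have := pos1 m; rewrite -H ltxx.
Qed.

Lemma conj_ne0 (u : CC) : u != 0 -> u^* != 0.
Proof. by rewrite conjC_eq0. Qed.

Lemma phi_S3 m u : Hc m u -> S3 (phi m u).
Proof.
move=> H; have u0 := Hc_u0 H; have u0' := conj_ne0 u0.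
rewrite /S3 /phi /=; pushc.
apply/eqP; rewrite -subr_eq0; apply/eqP.
have E : u + u^* - (1 + m * m^*) = 0 by rewrite H subrr.
transitivity (-(u + u^* - (1 + m * m^*)) / (u * u^*)); first by field; rewrite conjC_eq0 u0.
by rewrite E oppr0 mul0r.
Qed.

Lemma phi_ne_e1 m u : u != 0 -> phi m u <> e1.
Proof.
move=> u0 [] /eqP; rewrite subr_eq addrC -subr_eq subrr eq_sym invr_eq0.
by rewrite (negbTE u0).
Qed.

Lemma phi_inj m1 u1 m2 u2 : u1 != 0 -> u2 != 0 -> phi m1 u1 = phi m2 u2 -> m1 = m2.
Proof.
move=> h1 h2 [] E1 E2.
have : u1^-1 = u2^-1 by apply: oppr_inj; apply: (addrI 1).
move/invr_inj => E; move: E2; rewrite E => /(mulIf _); apply.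
by rewrite invr_eq0.
Qed.

Lemma S3_e1_or_phi q : S3 q -> q = e1 \/ exists m u, Hc m u /\ q = phi m u.
Proof.
case: q => q1 q2; rewrite /S3 /= => S.
have [E|ne] := eqVneq q1 1.
  left; move: S; rewrite E rmorph1 mulr1 -[RHS]addr0 => /addrI /eqP.
  by rewrite mul_conjC_eq0 => /eqP ->.
right; have d0 : 1 - q1 != 0 by rewrite subr_eq0 eq_sym.
have d0' := conj_ne0 d0.
exists (q2 / (1 - q1)), (1 - q1)^-1; split.
  rewrite /Hc; pushc.
  apply/eqP; rewrite -subr_eq0; apply/eqP.
  have d1 : 1 - q1^* != 0 by move: d0'; pushc.
  have E : q1 * q1^* + q2 * q2^* - 1 = 0 by rewrite S subrr.
  transitivity (-(q1 * q1^* + q2 * q2^* - 1) / ((1 - q1) * (1 - q1^*))); first by field; rewrite d0 d1.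
  by rewrite E oppr0 mul0r.
rewrite /phi invrK; congr (_, _); first by ring.
by field.
Qed.

Lemma mob_on a w m1 m2 m3 :
  a + w * m1 != 0 -> a + w * m2 != 0 -> a + w * m3 != 0 -> m1 != m2 ->
  on (phi m1 (a+w * m1)) (phi m2 (a+w * m2)) (phi m3 (a+w * m3)).
Proof.
move=> h1 h2 h3 h12; have h12' : m2 - m1 != 0 by rewrite subr_eq0 eq_sym.
exists ((a + w * m2) * (m3 - m1) / ((a + w * m3) * (m2 - m1))).
rewrite /phi /=; congr (_, _); field; by rewrite h1 h2 h3 h12'.
Qed.

Lemma vert_on m u u' : u != 0 -> u' != 0 -> on e1 (phi m u) (phi m u').
Proof.
move=> h1 h2; exists (u / u'); rewrite /phi /=; congr (_, _); field; by rewrite h1 h2.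
Qed.

Lemma e1_on_same m ux uy : ux != 0 -> uy != 0 -> ux != uy -> on (phi m ux) (phi m uy) e1.
Proof.
move=> h1 h2 h12; have h' : uy - ux != 0 by rewrite subr_eq0 eq_sym.
exists (uy / (uy - ux)); rewrite /phi /=; congr (_, _); field; by rewrite h1 h2 h'.
Qed.

Lemma Hc_circ a w m0 m : Hc m0 (a + w * m0) ->
  (m - w^*)*(m - w^*)^* = (m0 - w^*)*(m0 - w^*)^* -> Hc m (a + w * m).
Proof.
rewrite /Hc; pushc => H1 H2.
apply/eqP; rewrite -subr_eq0; apply/eqP.
transitivity ((a + w * m0 + (a^* + w^* * m0^*) - (1 + m0 * m0^*))
   - ((m - w^*) * (m^* - w) - (m0 - w^*) * (m0^* - w))); first by ring.
by rewrite H1 H2 !subrr.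
Qed.

Lemma planar (k c mq : CC) : c != 0 -> exists m1 m2 g : CC, m1 != m2 /\
  (m1 - k) * (m1 - k)^* = c * c^* /\ (m2 - k) * (m2 - k)^* = c * c^* /\
  (m1 - g) * (m1 - g)^* = (mq - g) * (mq - g)^* /\
  (m2 - g) * (m2 - g)^* = (mq - g) * (mq - g)^*.
Proof.
move=> c0.
have ii : 'i * 'i = -1 :> CC by rewrite -expr2 sqrCi.
have [d0|d0] := eqVneq (mq - k) 0.
  have mqk : mq = k by apply/eqP; rewrite -subr_eq0 d0.
  exists (k + c), (k + 'i * c), (k + (1 + 'i) * c / 2); split; last split; last split; last split.
  - rewrite (can_eq (addKr k)) -[X in X == _]mul1r (inj_eq (mulIf c0)).
    apply/eqP => h1.
    have : (1 : CC) = -1 by rewrite -ii -h1 mulr1.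
    move/eqP; rewrite -subr_eq0 opprK -mulr2n pnatr_eq0 //.
  - by rewrite addrAC subrr add0r.
  - rewrite addrAC subrr add0r; pushc.
    transitivity (- ('i * 'i) * (c * c^*)); first by ring.
    by rewrite ii opprK mul1r.
  - by rewrite mqk; pushc; field.
  - by rewrite mqk; pushc; field.
have dE : mq = k + (mq - k) by rewrite addrC subrK.
move: (mq - k) d0 dE => d d0 dE.
have i0 : 'i != 0 :> CC.
  by apply/eqP => h0; move: ii; rewrite h0 mul0r => /eqP; rewrite eq_sym oppr_eq0 oner_eq0.
have dd0 : d * d^* != 0 by rewrite mul_conjC_eq0 d0.
have dd1 : d^* * d != 0 by rewrite mulrC.
have nn : 0 <= c * c^* / (d * d^*) by rewrite divr_ge0 // mul_conjC_ge0.
have [s [s2 sc s0]] : exists s, [/\ s * s = c * c^* / (d * d^*), s^* = s & s != 0].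
  exists (sqrtC (c * c^* / (d * d^*))); split.
  - by rewrite -expr2 sqrtCK.
  - by apply: conj_Creal; apply: sqrtC_real.
  - by rewrite sqrtC_eq0 mulf_eq0 invr_eq0 negb_or mul_conjC_eq0 c0 dd0.
have [l [lE lc]] : exists l, l = (d * d^* - c * c^*) / (2 * (d * d^*)) /\ l^* = l.
  eexists; split; first reflexivity.
  by pushc; field; rewrite conjC_eq0 d0.
exists (k + 'i * s * d), (k - 'i * s * d), (k + l * d); split; last split; last split; last split.
- rewrite (can_eq (addKr k)); apply/eqP => h.
  have : 'i * s * d * 2 = 0.
    by rewrite mulr_natr mulr2n {2}h subrr.
  move/eqP; rewrite !mulf_eq0 pnatr_eq0 (negbTE s0) (negbTE d0) (negbTE i0) /=.
  by [].
- rewrite addrC addKr; pushc; rewrite sc.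
  transitivity (- ('i * 'i) * (s * s) * (d * d^*)); first by ring.
  by rewrite ii opprK mul1r s2; field; rewrite conjC_eq0 d0.
- rewrite addrC addKr; pushc; rewrite sc.
  transitivity (- ('i * 'i) * (s * s) * (d * d^*)); first by ring.
  by rewrite ii opprK mul1r s2; field; rewrite conjC_eq0 d0.
- rewrite dE; pushc; rewrite sc lc.
  transitivity (- ('i * 'i) * (s * s) * (d * d^*) + l * l * (d * d^*)); first by ring.
  by rewrite ii opprK mul1r s2 lE; field; rewrite conjC_eq0 d0.
- rewrite dE; pushc; rewrite sc lc.
  transitivity (- ('i * 'i) * (s * s) * (d * d^*) + l * l * (d * d^*)); first by ring.
  by rewrite ii opprK mul1r s2 lE; field; rewrite conjC_eq0 d0.
Qed.


Lemma Hc_circ2 a w m0 m : Hc m0 (a + w * m0) -> Hc m (a + w * m) ->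
  (m - w^*) * (m - w^*)^* = (m0 - w^*) * (m0 - w^*)^*.
Proof.
rewrite /Hc; pushc => H1 H2.
apply/eqP; rewrite -subr_eq0; apply/eqP.
transitivity (((1 + m * m^*) - (a + w * m + (a^* + w^* * m^*)))
   - ((1 + m0 * m0^*) - (a + w * m0 + (a^* + w^* * m0^*)))); first by ring.
by rewrite H1 H2 !subrr.
Qed.

Definition Rclosed (P : C2 -> Prop) :=
  forall x y q, P x -> P y -> x <> y -> S3 q -> on x y q -> P q.

Lemma core P : (forall q, P q -> S3 q) -> Rclosed P -> P e1 ->
  forall x y, P x -> P y -> x <> y -> ~ on x y e1 -> forall q, S3 q -> P q.
Proof.
move=> PS R Pe x y Px Py nxy non q Sq.
have [xe|[mx [ux [Hx xE]]]] := S3_e1_or_phi (PS x Px).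
  by case: non; rewrite xe; exists 0; rewrite /e1 /=; congr (_, _); ring.
have [ye|[my [uy [Hy yE]]]] := S3_e1_or_phi (PS y Py).
  by case: non; rewrite ye; exists 1; rewrite /e1 /=; congr (_, _); ring.
subst x y.
have ux0 := Hc_u0 Hx; have uy0 := Hc_u0 Hy.
have mxy : mx != my.
  apply/eqP => E; subst my.
  have uxy : ux != uy by apply/eqP => E; subst; apply: nxy.
  by apply: non; apply: e1_on_same.
have mxy' : my - mx != 0 by rewrite subr_eq0 eq_sym.
have [w [a [Ex Ey]]] : exists w a, ux = a + w * mx /\ uy = a + w * my.
  exists ((uy - ux) / (my - mx)), (ux - (uy - ux) / (my - mx) * mx); split.
    by rewrite subrK.
  by field.
rewrite Ex in Hx Px ux0; rewrite Ey in Hy Py uy0.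
pose circ m := (m - w^*) * (m - w^*)^* = (mx - w^*) * (mx - w^*)^*.
have cy : circ my := Hc_circ2 Hx Hy.
have C0 : forall m, circ m -> P (phi m (a + w * m)).
  move=> m cm; have Hm := Hc_circ Hx cm.
  apply: (R _ _ _ Px Py); last (apply: mob_on => //; exact: Hc_u0 Hm).
  - by move/phi_inj => /(_ ux0 uy0) /eqP; rewrite (negbTE mxy).
  - exact: phi_S3.
have cyl : forall m u', circ m -> Hc m u' -> P (phi m u').
  move=> m u' cm Hm'; have Hm := Hc_circ Hx cm.
  have a0 := Hc_u0 Hm; have u0 := Hc_u0 Hm'.
  apply: (R _ _ _ Pe (C0 m cm) _ (phi_S3 Hm') (vert_on m a0 u0)).
  by move=> /esym; apply: phi_ne_e1 a0.
have r0 : mx - w^* != 0.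
  apply/eqP => E.
  have : (my - w^*) * (my - w^*)^* == 0 by rewrite cy E mul0r.
  rewrite mul_conjC_eq0 subr_eq0 => /eqP E2.
  by move: E => /eqP; rewrite subr_eq0 -E2 (negbTE mxy).
have [qe|[mq [uq [Hq ->]]]] := S3_e1_or_phi Sq; first by rewrite qe.
have [m1 [m2 [g [n12 [c1 [c2 [g1 g2]]]]]]] := planar (w^*) mq r0.
have [w' [a' [Eq gw]]] : exists w' a', uq = a' + w' * mq /\ w'^* = g.
  by exists g^*, (uq - g^* * mq); rewrite subrK conjCK.
rewrite Eq in Hq *.
rewrite -gw in g1 g2.
have H1 := Hc_circ Hq g1; have H2 := Hc_circ Hq g2.
have P1 := cyl _ _ c1 H1; have P2 := cyl _ _ c2 H2.
have b1 := Hc_u0 H1; have b2 := Hc_u0 H2; have bq := Hc_u0 Hq.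
apply: (R _ _ _ P1 P2 _ (phi_S3 Hq) (mob_on b1 b2 bq n12)).
by move/(phi_inj b1 b2) => /eqP; rewrite (negbTE n12).
Qed.

Definition Psi (z p : C2) : C2 := (p.1 * z.1 - p.2 * z.2^*, p.1 * z.2 + p.2 * z.1^*).
Definition Phi (z p : C2) : C2 := (p.1 * z.1^* + p.2 * z.2^*, - p.1 * z.2 + p.2 * z.1).

Lemma PsiPhi z p : S3 z -> Psi z (Phi z p) = p.
Proof.
case: z p => z1 z2 [p1 p2]; rewrite /S3 /Psi /Phi /= => S; pushc; congr (_, _).
  transitivity (p1 * (z1 * z1^* + z2 * z2^*)); first by ring.
  by rewrite S mulr1.
transitivity (p2 * (z1 * z1^* + z2 * z2^*)); first by ring.
by rewrite S mulr1.
Qed.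

Lemma PhiPsi z p : S3 z -> Phi z (Psi z p) = p.
Proof.
case: z p => z1 z2 [p1 p2]; rewrite /S3 /Psi /Phi /= => S; pushc; congr (_, _).
  transitivity (p1 * (z1 * z1^* + z2 * z2^*)); first by ring.
  by rewrite S mulr1.
transitivity (p2 * (z1 * z1^* + z2 * z2^*)); first by ring.
by rewrite S mulr1.
Qed.

Lemma S3_Psi z p : S3 z -> (S3 (Psi z p) <-> S3 p).
Proof.
case: z p => z1 z2 [p1 p2]; rewrite /S3 /Psi /= => S.
have -> : (p1 * z1 - p2 * z2^*) * (p1 * z1 - p2 * z2^*)^* +
          (p1 * z2 + p2 * z1^*) * (p1 * z2 + p2 * z1^*)^* =
          (p1 * p1^* + p2 * p2^*) * (z1 * z1^* + z2 * z2^*).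
  by pushc; ring.
by rewrite S mulr1.
Qed.

Lemma on_Psi z x y q : on x y q -> on (Psi z x) (Psi z y) (Psi z q).
Proof.
case=> t ->; exists t; rewrite /Psi /=; pushc; congr (_, _); ring.
Qed.

Lemma Psi_e1 z : Psi z e1 = z.
Proof. by case: z => z1 z2; rewrite /Psi /e1 /=; congr (_, _); ring. Qed.

Lemma transport A z x y : (forall q, A q -> S3 q) -> Rclosed A -> A z -> A x -> A y ->
  x <> y -> ~ on x y z -> forall q, S3 q -> A q.
Proof.
move=> AS R Az Ax Ay nxy nz q Sq.
have Sz := AS z Az.
pose P := fun p => A (Psi z p).
have PS : forall p, P p -> S3 p by move=> p Pp; apply/(S3_Psi p Sz); exact: AS.
have RP : Rclosed P.
  move=> x0 y0 q0 Px0 Py0 n Sq0 On.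
  apply: (R _ _ _ Px0 Py0 _ _ (on_Psi z On)).
    by move=> E; apply: n; rewrite -(PhiPsi x0 Sz) E PhiPsi.
  by apply/(S3_Psi q0 Sz).
have Pe : P e1 by rewrite /P Psi_e1.
have Px : P (Phi z x) by rewrite /P PsiPhi.
have Py : P (Phi z y) by rewrite /P PsiPhi.
have n' : Phi z x <> Phi z y.
  by move=> E; apply: nxy; rewrite -(PsiPhi x Sz) E PsiPhi.
have no : ~ on (Phi z x) (Phi z y) e1.
  by move/(on_Psi z); rewrite !PsiPhi // Psi_e1.
have SqP : S3 (Phi z q) by apply/(S3_Psi _ Sz); rewrite PsiPhi.
have := core PS RP Pe Px Py n' no SqP.
by rewrite /P PsiPhi.
Qed.

Lemma lc_R A : linearly_closed A -> Rclosed A.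
Proof.
move=> [AS AL] x y q Ax Ay nxy Sq Oq.
apply: (AL x y Ax Ay nxy (fun p => on x y p /\ S3 p)); last by split.
- exists x, (y.1 - x.1, y.2 - x.2); split; last split.
  + case=> /eqP h1 /eqP h2; apply: nxy; case: x y h1 h2 {Ax Ay Oq} => a b [c d] /=.
    by rewrite !subr_eq0 => /eqP -> /eqP ->.
  + exists x, y; split=> //; split; first by exists 0; case: x {Ax Oq nxy} => a b /=; congr (_, _); ring.
    split; first exact: AS.
    split; last exact: AS.
    by exists 1; case: x y {Ax Ay Oq nxy} => a b [c d] /=; congr (_, _); ring.
  + by [].
- split; last exact: AS.
  by exists 0; case: x {Ax Oq nxy} => a b /=; congr (_, _); ring.
- split; last exact: AS.
  by exists 1; case: x y {Ax Ay Oq nxy} => a b [c d] /=; congr (_, _); ring.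
Qed.

From Stdlib Require Import Classical.

Theorem proposition3p3 (A : C2 -> Prop) :
  linearly_closed A ->
  ~ (forall q, A q <-> S3 q) ->
  (forall q, ~ A q) \/
  (exists x, S3 x /\ forall q, A q <-> q = x) \/
  abstract_line A.
Proof.
move=> LC prop; have R := lc_R LC; case: LC => AS _.
case: (classic (exists x, A x)) => [[x Ax]|no]; last first.
  by left => q Aq; apply: no; exists q.
case: (classic (exists y, A y /\ y <> x)) => [[y [Ay nyx]]|no1]; last first.
  right; left; exists x; split; first exact: AS.
  move=> q; split; last by move=> ->.
  move=> Aq; apply: NNPP => nq; apply: no1; by exists q.
have nxy : x <> y by move=> E; apply: nyx.
case: (classic (exists z, A z /\ ~ on x y z)) => [[z [Az nz]]|no2].
  exfalso; apply: prop => q; split; first exact: AS.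
  exact: (transport AS R Az Ax Ay nxy nz).
right; right; exists x, (y.1 - x.1, y.2 - x.2); split; last split.
- case=> /eqP h1 /eqP h2; apply: nxy; case: x y h1 h2 {Ax Ay no2 nyx} => a b [c d] /=.
  by rewrite !subr_eq0 => /eqP -> /eqP ->.
- exists x, y; split=> //; split; first by exists 0; case: x {Ax no2 nyx nxy} => a b /=; congr (_, _); ring.
  split; first exact: AS.
  split; last exact: AS.
  by exists 1; case: x y {Ax Ay no2 nyx nxy} => a b [c d] /=; congr (_, _); ring.
- move=> q; split.
    move=> Aq; split; last exact: AS.
    by apply: NNPP => nq; apply: no2; exists q.
  by case=> Oq Sq; exact: (R x y q Ax Ay nxy Sq Oq).
Qed.
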